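(* Let $E$ be a vector lattice, and suppose that $F$ is an order dense ideal in $E$ admitting an o-Lebesgue topology $\tau_F$. Then $\mathrm{u}_F\tau_F$ is a uo-Lebesgue topology on $E$. Suppose that at least one of the following holds: (a) $E$ has the countable sup property; (b) $\tau_F$ is metrisable and $F$ has a countable order basis (which is always the case when $\tau_F$ is a metrisable uo-Lebesgue topology). Then $C_{\mathrm{u}_F\tau_F}=E$. Consequently: (1) every $\mathrm{u}_F\tau_F$-convergent net in $E$ has an embedded sequence that is uo-convergent as well as $\mathrm{u}_F\tau_F$-convergent to the same limit; (2) a sequence in $E$ is $\mathrm{u}_F\tau_F$-convergent to $x\in E$ if and only if every subsequence has a further subsequence that is uo-convergent to $x$.
   Context: All vector lattices are real and Archimedean; linear topologies are Hausdorff. A locally solid topology on a vector lattice is a linear topology such that zero has a neighbourhood basis of solid sets. Order convergence: $x_\alpha\to x$ in order if there is a net $y_\beta\downarrow0$ such that for each $\beta_0$ eventually $|x_\alpha-x|\leq y_{\beta_0}$; uo-convergence: $|x_\alpha-x|\wedge|y|\to0$ in order for all $y\in E$. o-Lebesgue (resp. uo-Lebesgue) topology: a locally solid topology in which order (resp. uo-) convergent nets converge topologically to the same limit. $F$ is order dense in $E$ if for every $x>0$ in $E$ there is $y\in F$ with $0<y\leq x$. For a locally solid topology $\tau_F$ on $F$, the unbounded topology $\mathrm{u}_F\tau_F$ on $E$ is the locally solid topology with neighbourhood basis at zero the sets $U_{V,y}=\{x\in E: |x|\wedge|y|\in V\}$, with $V$ ranging over a basis of solid $\tau_F$-neighbourhoods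 of zero in $F$ and $y$ over $F$. A sequence $(V_n)$ of neighbourhoods of zero is normal if $V_{n+1}+V_{n+1}\subseteq V_n$; the carrier $C_\tau$ of a locally solid topology $\tau$ on $E$ is the union of the disjoint complements $N^{\mathrm d}$ where $N=\bigcap_nV_n$ ranges over intersections of normal sequences of solid $\tau$-neighbourhoods of zero. An order basis of a vector lattice $G$ is a non-empty $A\subseteq G$ with $A^{\mathrm d}=\{0\}$. Countable sup property: every subset with a supremum contains an at most countable subset with the same supremum. Embedded sequence: given a net $(x_\alpha)_{\alpha\in A}$, a sequence $(x_{\alpha_n})$ with $\alpha_1\leq\alpha_2\leq\dotsb$, strictly increasing when $A$ has no largest element. *)

(* Defs.v *)
From HB Require Import structures.
From mathcomp Require Import all_boot all_order all_algebra.
From mathcomp Require Import boolp classical_sets cardinality reals.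
Set Implicit Arguments. Unset Strict Implicit. Unset Printing Implicit Defensive.
Import Order.TTheory GRing.Theory Num.Theory.
Local Open Scope classical_set_scope.
Local Open Scope ring_scope.

Definition VL_axioms (R : realType) (V : lmodType R)
    (le : V -> V -> Prop) (join : V -> V -> V) : Prop :=
  (forall x, le x x) /\
  (forall x y, le x y -> le y x -> x = y) /\
  (forall x y z, le x y -> le y z -> le x z) /\
  (forall x y z, le x y -> le (x + z) (y + z)) /\
  (forall (a : R) x y, 0 <= a -> le x y -> le (a *: x) (a *: y)) /\
  (forall x y, [/\ le x (join x y), le y (join x y) &
                   forall z, le x z -> le y z -> le (join x y) z]) /\
  (forall x y, le 0 x -> (forall n : nat, le (x *+ n) y) -> x = 0).

Record VL (R : realType) := MkVL {
  vl_car :> lmodType R;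
  vl_le : vl_car -> vl_car -> Prop;
  vl_join : vl_car -> vl_car -> vl_car;
  vl_ax : VL_axioms vl_le vl_join }.

Section VLdefs.
Variables (R : realType) (E : VL R).
Local Notation le := (@vl_le R E).
Local Notation join := (@vl_join R E).

Definition vl_meet (x y : E) : E := - join (- x) (- y).
Definition vl_abs (x : E) : E := join x (- x).
Local Notation meet := vl_meet.
Local Notation abs := vl_abs.

Definition disj (x y : E) : Prop := meet (abs x) (abs y) = 0.
Definition dcompl_in (S D : set E) : set E :=
  [set x | S x /\ forall y, D y -> disj x y].

Definition is_ideal (F : set E) : Prop :=
  [/\ F 0, (forall x y, F x -> F y -> F (x + y)),
      (forall (a : R) x, F x -> F (a *: x)) &
      (forall x y, F y -> le (abs x) (abs y) -> F x)].

Definition order_dense (F : set E) : Prop :=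
  forall x : E, le 0 x -> x <> 0 ->
    exists y, [/\ F y, le 0 y, y <> 0 & le y x].

Definition is_sup_of (D : set E) (s : E) : Prop :=
  (forall d, D d -> le d s) /\ (forall z, (forall d, D d -> le d z) -> le s z).

Definition countable_sup_property : Prop :=
  forall (D : set E) (s : E), is_sup_of D s ->
    exists D' : set E, [/\ D' `<=` D, countable D' & is_sup_of D' s].

Definition is_order_basis_in (S A : set E) : Prop :=
  [/\ A `<=` S, A !=set0 & forall x, dcompl_in S A x -> x = 0].

Definition has_countable_order_basis_in (S : set E) : Prop :=
  exists A : set E, is_order_basis_in S A /\ countable A.

Definition directed (A : Type) (leA : A -> A -> Prop) : Prop :=
  [/\ (exists a : A, True), (forall a, leA a a),
      (forall a b c, leA a b -> leA b c -> leA a c) &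
      (forall a b, exists c, leA a c /\ leA b c)].

Definition eventually (A : Type) (leA : A -> A -> Prop) (P : A -> Prop) : Prop :=
  exists a0, forall a, leA a0 a -> P a.

(* order convergence of the net x (indexed by (A,leA)) to l, computed in the
   sublattice S: the dominating net y_b decreases to 0 in S *)
Definition oconv_in (S : set E) (A : Type) (leA : A -> A -> Prop)
    (x : A -> E) (l : E) : Prop :=
  exists (B : Type) (leB : B -> B -> Prop) (y : B -> E),
    directed leB /\ (forall b, S (y b)) /\
    (forall b1 b2, leB b1 b2 -> le (y b2) (y b1)) /\
    (forall b, le 0 (y b)) /\
    (forall z, S z -> (forall b, le z (y b)) -> le z 0) /\
    (forall b0, eventually leA (fun a => le (abs (x a - l)) (y b0))).

Definition uoconv_in (S : set E) (A : Type) (leA : A -> A -> Prop)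
    (x : A -> E) (l : E) : Prop :=
  forall y, S y -> oconv_in S leA (fun a => meet (abs (x a - l)) (abs y)) 0.

(* Locally solid topologies on a sublattice S, given by their filter N of    *)
(* neighbourhoods of zero (subsets of S).                                    *)

Definition solid_in (S U : set E) : Prop :=
  U `<=` S /\ forall x y, S x -> U y -> le (abs x) (abs y) -> U x.

Definition is_loc_solid_top (S : set E) (N : set (set E)) : Prop :=
  (exists U, N U) /\
  (forall U, N U -> U `<=` S) /\
  (forall U V, N U -> U `<=` V -> V `<=` S -> N V) /\
  (forall U V, N U -> N V -> N (U `&` V)) /\
  (forall U, N U -> forall x, S x ->
     exists e : R, 0 < e /\ forall t : R, `|t| <= e -> U (t *: x)) /\
  (forall U, N U -> exists V, [/\ N V, V `<=` U &
     forall x (t : R), V x -> `|t| <= 1 -> V (t *: x)]) /\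
  (forall U, N U -> exists V, N V /\ forall x y, V x -> V y -> U (x + y)) /\
  (forall U, N U -> exists V, [/\ N V, solid_in S V & V `<=` U]) /\
  (forall x, S x -> (forall U, N U -> U x) -> x = 0).

Definition tconv (N : set (set E)) (A : Type) (leA : A -> A -> Prop)
    (x : A -> E) (l : E) : Prop :=
  forall U, N U -> eventually leA (fun a => U (x a - l)).

Definition o_Lebesgue_in (S : set E) (N : set (set E)) : Prop :=
  is_loc_solid_top S N /\
  forall (A : Type) (leA : A -> A -> Prop) (x : A -> E) (l : E),
    directed leA -> (forall a, S (x a)) -> S l ->
    oconv_in S leA x l -> tconv N leA x l.

Definition uo_Lebesgue_in (S : set E) (N : set (set E)) : Prop :=
  is_loc_solid_top S N /\
  forall (A : Type) (leA : A -> A -> Prop) (x : A -> E) (l : E),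
    directed leA -> (forall a, S (x a)) -> S l ->
    uoconv_in S leA x l -> tconv N leA x l.

Definition top_open_in (S : set E) (N : set (set E)) (O : set E) : Prop :=
  O `<=` S /\ forall x, O x -> exists U, N U /\ [set x + u | u in U] `<=` O.

Definition metrisable_in (S : set E) (N : set (set E)) : Prop :=
  exists d : E -> E -> R,
    [/\ (forall x y, S x -> S y -> 0 <= d x y),
        (forall x y, S x -> S y -> (d x y = 0 <-> x = y)),
        (forall x y, S x -> S y -> d x y = d y x),
        (forall x y z, S x -> S y -> S z -> d x z <= d x y + d y z) &
        (forall O, O `<=` S ->
           (top_open_in S N O <->
            forall x, O x -> exists r : R, 0 < r /\
              [set y | S y /\ d x y < r] `<=` O))].

Definition uF (F : set E) (NF : set (set E)) : set (set E) :=
  fun W => exists (V : set E) (y : E),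
    [/\ NF V, solid_in F V, F y & [set x | V (meet (abs x) (abs y))] `<=` W].

Definition normal_seq (V : nat -> set E) : Prop :=
  forall n x y, V n.+1 x -> V n.+1 y -> V n (x + y).

Definition carrier (N : set (set E)) : set E :=
  [set x | exists V : nat -> set E,
     [/\ (forall n, N (V n)), (forall n, solid_in setT (V n)), normal_seq V &
         dcompl_in setT (\bigcap_n V n) x]].

Definition embedded_seq (A : Type) (leA : A -> A -> Prop) (al : nat -> A) : Prop :=
  (forall n, leA (al n) (al n.+1)) /\
  (~ (exists top, forall a, leA a top) -> forall n, ~ leA (al n.+1) (al n)).

End VLdefs.

Definition nat_le (m n : nat) : Prop := (m <= n)%N.
Definition strict_incr (p : nat -> nat) : Prop := forall n, (p n < p n.+1)%N.

(* Main.v *)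
Require Import Defs.
From HB Require Import structures.
From mathcomp Require Import all_boot all_order all_algebra.
From mathcomp Require Import boolp classical_sets cardinality reals.
Import Order.TTheory GRing.Theory Num.Theory.
Local Open Scope classical_set_scope.
Local Open Scope ring_scope.
Set Implicit Arguments. Unset Strict Implicit. Unset Printing Implicit Defensive.
From mathcomp.algebra_tactics Require Import lra.
Section Lat.
Variables (R : realType) (E : VL R).
Local Notation le := (@vl_le R E).
Local Notation jn := (@vl_join R E).
Local Notation mt := (@vl_meet R E).
Local Notation ab := (@vl_abs R E).

Let AX := vl_ax E.
Lemma lexx (x : E) : le x x.
Proof. by have [h _] := AX. Qed.
Lemma le_anti (x y : E) : le x y -> le y x -> x = y.
Proof. by have [_ [h _]] := AX; apply: h. Qed.
Lemma le_tr (x y z : E) : le x y -> le y z -> le x z.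
Proof. by have [_ [_ [h _]]] := AX; apply: h. Qed.
Lemma le_addr (x y z : E) : le x y -> le (x + z) (y + z).
Proof. by have [_ [_ [_ [h _]]]] := AX; apply: h. Qed.
Lemma le_scale (a : R) (x y : E) : 0 <= a -> le x y -> le (a *: x) (a *: y).
Proof. by have [_ [_ [_ [_ [h _]]]]] := AX; apply: h. Qed.
Lemma joinP (x y : E) : [/\ le x (jn x y), le y (jn x y) &
                   forall z, le x z -> le y z -> le (jn x y) z].
Proof. by have [_ [_ [_ [_ [_ [h _]]]]]] := AX; apply: h. Qed.
Lemma archi (x y : E) : le 0 x -> (forall n : nat, le (x *+ n) y) -> x = 0.
Proof. by have [_ [_ [_ [_ [_ [_ h]]]]]] := AX; apply: h. Qed.

Lemma le_addl (x y z : E) : le x y -> le (z + x) (z + y).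
Proof. by rewrite ![z + _]addrC; apply: le_addr. Qed.
Lemma le_add (a b c d : E) : le a b -> le c d -> le (a + c) (b + d).
Proof. move=> h1 h2; apply: le_tr (le_addr c h1) (le_addl b h2). Qed.
Lemma le_addrK (x y z : E) : le (x + z) (y + z) -> le x y.
Proof. by move=> /(le_addr (- z)); rewrite !addrK. Qed.
Lemma le_subP (x y : E) : le x y <-> le 0 (y - x).
Proof.
split=> h; first by have := le_addr (- x) h; rewrite subrr.
by have := le_addr x h; rewrite add0r subrK.
Qed.
Lemma le_opp (x y : E) : le x y -> le (- y) (- x).
Proof.
move=> h; have := le_addr (- x - y) h.
by rewrite addNKr [- x - y]addrC addNKr.
Qed.
Lemma le_oppP (x y : E) : le (- y) (- x) -> le x y.
Proof. by move=> /le_opp; rewrite !opprK. Qed.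
Lemma le_sub0 (x y : E) : le 0 y -> le (x - y) x.
Proof. by move=> h; have := le_addl x (le_opp h); rewrite oppr0 addr0. Qed.
Lemma le_add0 (x y : E) : le 0 y -> le x (x + y).
Proof. by move=> h; have := le_addl x h; rewrite addr0. Qed.
Lemma le_add_pos (x y : E) : le 0 x -> le 0 y -> le 0 (x + y).
Proof. by move=> h1 h2; rewrite -[0]addr0; apply: le_add. Qed.

Lemma join_l (x y : E) : le x (jn x y). Proof. by case: (joinP x y). Qed.
Lemma join_r (x y : E) : le y (jn x y). Proof. by case: (joinP x y). Qed.
Lemma join_lub (x y z : E) : le x z -> le y z -> le (jn x y) z.
Proof. by case: (joinP x y) => _ _; apply. Qed.
Lemma joinC (x y : E) : jn x y = jn y x.
Proof. by apply: le_anti; apply: join_lub; [apply: join_r|apply: join_l|apply: join_r|apply: join_l]. Qed.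
Lemma join_mono (x y x' y' : E) : le x x' -> le y y' -> le (jn x y) (jn x' y').
Proof.
move=> h1 h2; apply: join_lub; [exact: le_tr h1 (join_l _ _)|exact: le_tr h2 (join_r _ _)].
Qed.
Lemma join_id (x y : E) : le y x -> jn x y = x.
Proof. by move=> h; apply: le_anti; [apply: join_lub => //; apply: lexx|apply: join_l]. Qed.

Lemma meetE (x y : E) : mt x y = - jn (- x) (- y). Proof. by []. Qed.
Lemma meet_l (x y : E) : le (mt x y) x.
Proof. by apply: le_oppP; rewrite opprK; apply: join_l. Qed.
Lemma meet_r (x y : E) : le (mt x y) y.
Proof. by apply: le_oppP; rewrite opprK; apply: join_r. Qed.
Lemma meet_glb (x y z : E) : le z x -> le z y -> le z (mt x y).
Proof.
move=> h1 h2; apply: le_oppP; rewrite meetE opprK.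
by apply: join_lub; apply: le_opp.
Qed.
Lemma meetC (x y : E) : mt x y = mt y x.
Proof. by rewrite /vl_meet joinC. Qed.
Lemma meet_mono (x y x' y' : E) : le x x' -> le y y' -> le (mt x y) (mt x' y').
Proof.
move=> h1 h2; apply: meet_glb; [exact: le_tr (meet_l _ _) h1|exact: le_tr (meet_r _ _) h2].
Qed.
Lemma meet_id (x y : E) : le x y -> mt x y = x.
Proof. by move=> h; apply: le_anti; [apply: meet_l|apply: meet_glb => //; apply: lexx]. Qed.

Lemma addJ (x y z : E) : x + jn y z = jn (x + y) (x + z).
Proof.
apply: le_anti; last by apply: join_lub; apply: le_addl; [apply: join_l|apply: join_r].
apply: (@le_addrK _ _ (- x)); rewrite [x + _]addrC addrK.
apply: join_lub.
- by have := le_addr (- x) (join_l (x + y) (x + z)); rewrite [x + y]addrC addrK.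
- by have := le_addr (- x) (join_r (x + y) (x + z)); rewrite [x + z]addrC addrK.
Qed.
Lemma addM (x y z : E) : x + mt y z = mt (x + y) (x + z).
Proof.
rewrite !meetE -[x]opprK -opprD addJ opprK; congr (- jn _ _); by rewrite opprD.
Qed.
Lemma join_meet (x y : E) : jn x y + mt x y = x + y.
Proof.
have h : x + y + jn (- x) (- y) = jn y x.
  by rewrite addJ addrK [x + y]addrC addrK.
have -> : mt x y = x + y - jn y x by rewrite -h opprD addrA subrr add0r.
by rewrite joinC addrC subrK.
Qed.

Lemma le_abs (x : E) : le x (ab x). Proof. exact: join_l. Qed.
Lemma le_absN (x : E) : le (- x) (ab x). Proof. exact: join_r. Qed.
Lemma abs_le (x b : E) : le x b -> le (- x) b -> le (ab x) b.
Proof. exact: join_lub. Qed.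
Lemma abs_opp (x : E) : ab (- x) = ab x.
Proof. by rewrite /vl_abs opprK joinC. Qed.
Lemma abs_ge0 (x : E) : le 0 (ab x).
Proof.
have h : le (x - x) (ab x + ab x) by apply: le_add; [apply: le_abs|apply: le_absN].
rewrite subrr in h.
have := le_scale (_ : 0 <= 2^-1 :> R) h.
rewrite scaler0 -mulr2n -scaler_nat scalerA mulVf ?scale1r //.
  by apply; rewrite invr_ge0.
by rewrite pnatr_eq0.
Qed.
Lemma abs_pos (x : E) : le 0 x -> ab x = x.
Proof.
move=> h; apply: join_id; apply: (@le_tr _ 0) => //; have := le_opp h; by rewrite oppr0.
Qed.
Lemma abs0 : ab 0 = 0 :> E. Proof. exact/abs_pos/lexx. Qed.
Lemma abs_abs (x : E) : ab (ab x) = ab x. Proof. exact/abs_pos/abs_ge0. Qed.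
Lemma abs_eq0 (x : E) : ab x = 0 -> x = 0.
Proof.
move=> h; apply: le_anti; first by rewrite -h; apply: le_abs.
by apply: le_oppP; rewrite oppr0 -h; apply: le_absN.
Qed.
Lemma abs_tri (x y : E) : le (ab (x + y)) (ab x + ab y).
Proof.
apply: abs_le; first by apply: le_add; apply: le_abs.
by rewrite opprD; apply: le_add; apply: le_absN.
Qed.
Lemma abs_sub (x y : E) : ab (x - y) = ab (y - x).
Proof. by rewrite -abs_opp opprB. Qed.
Lemma join00 : jn 0 0 = 0 :> E. Proof. exact/join_id/lexx. Qed.
Lemma scaleJ (a : R) (x y : E) : 0 <= a -> a *: jn x y = jn (a *: x) (a *: y).
Proof.
rewrite le0r => /orP[/eqP->|ha]; first by rewrite !scale0r join00.
apply: le_anti; last by apply: join_lub; apply: le_scale; rewrite ?ltW //; [apply: join_l|apply: join_r].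
have hi : 0 <= a^-1 by rewrite invr_ge0 ltW.
have := le_scale (x := a^-1 *: jn (a *: x) (a *: y)) hi.
suff h : le (jn x y) (a^-1 *: jn (a *: x) (a *: y)).
  have := le_scale (ltW ha) h; by rewrite scalerA divff ?gt_eqF // scale1r.
apply: join_lub.
- have := le_scale hi (join_l (a *: x) (a *: y)); by rewrite scalerA mulVf ?gt_eqF // scale1r.
- have := le_scale hi (join_r (a *: x) (a *: y)); by rewrite scalerA mulVf ?gt_eqF // scale1r.
Qed.
Lemma absZ (a : R) (x : E) : ab (a *: x) = `|a| *: ab x.
Proof.
have hp b z : 0 <= b -> ab (b *: z) = b *: ab z.
  by move=> hb; rewrite /vl_abs scaleJ // scalerN.
have [ha|ha] := leP 0 a; first by rewrite ger0_norm // hp.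
rewrite ltr0_norm // -hp ?oppr_ge0 ?ltW //.
by rewrite scaleNr abs_opp.
Qed.

Lemma meet_pos (a b : E) : le 0 a -> le 0 b -> le 0 (mt a b).
Proof. exact: meet_glb. Qed.
Lemma meet_abs_ge0 (x y : E) : le 0 (mt (ab x) (ab y)).
Proof. by apply: meet_pos; apply: abs_ge0. Qed.
Lemma riesz (a b c : E) : le 0 a -> le 0 b -> le 0 c ->
  le (mt (a + b) c) (mt a c + mt b c).
Proof.
move=> ha hb hc; rewrite addM; apply: meet_glb.
- rewrite [mt a c + b]addrC addM; apply: meet_mono; first by rewrite [b + a]addrC; apply: lexx.
  by rewrite [b + c]addrC; apply: le_add0.
- apply: le_tr (meet_r _ _) _; rewrite [_ + c]addrC; apply: le_add0.
  exact: meet_pos.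
Qed.
Lemma disj_sum (a b : E) : mt a b = 0 -> jn a b = a + b.
Proof. by move=> h; rewrite -join_meet h addr0. Qed.
Lemma meet_abs_tri (x y c : E) : le 0 c ->
  le (mt (ab (x + y)) c) (mt (ab x) c + mt (ab y) c).
Proof.
move=> hc; apply: le_tr (riesz (abs_ge0 x) (abs_ge0 y) hc).
by apply: meet_mono; [apply: abs_tri|apply: lexx].
Qed.
Lemma sub_meet (z s : E) : z - mt z s = jn 0 (z - s).
Proof. by rewrite meetE opprK addJ subrr. Qed.
Lemma meet_le_pos (a b : E) : le 0 a -> le 0 b -> le (mt a b) (a + b).
Proof. by move=> ha hb; apply: le_tr (meet_l _ _) _; apply: le_add0. Qed.
Lemma abs_meet (x y : E) : ab (mt (ab x) (ab y)) = mt (ab x) (ab y).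
Proof. exact/abs_pos/meet_abs_ge0. Qed.
Lemma le_abs_pos (x y : E) : le 0 x -> le x y -> ab x = x /\ le 0 y.
Proof. by move=> h1 h2; split; [apply: abs_pos|apply: le_tr h2]. Qed.
Lemma meet00 (a : E) : le 0 a -> mt a 0 = 0.
Proof. by move=> h; apply: le_anti; [apply: meet_r|apply: meet_glb => //; apply: lexx]. Qed.
Lemma meetA (x y z : E) : mt x (mt y z) = mt (mt x y) z.
Proof.
apply: le_anti; apply: meet_glb.
- apply: meet_glb; first by apply: meet_l.
  by apply: le_tr (meet_r _ _) (meet_l _ _).
- by apply: le_tr (meet_r _ _) (meet_r _ _).
- by apply: le_tr (meet_l _ _) (meet_l _ _).
- apply: meet_glb; last by apply: meet_r.
  by apply: le_tr (meet_l _ _) (meet_r _ _).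
Qed.
Lemma pos_part_le (z b : E) : le z b -> le 0 b -> le (jn 0 z) b.
Proof. by move=> h1 h2; apply: join_lub. Qed.
Lemma le_pos_part (z : E) : le z (jn 0 z). Proof. exact: join_r. Qed.
Lemma pos_part_ge0 (z : E) : le 0 (jn 0 z). Proof. exact: join_l. Qed.
Lemma le_subl (x y : E) : le x y -> le 0 (y - x).
Proof. by move/le_subP. Qed.

End Lat.

Lemma enum_countable (T : Type) (A : set T) (a0 : T) : countable A ->
  exists v : nat -> T, (forall i, A (v i) \/ v i = a0) /\ (forall a, A a -> exists i, v i = a).
Proof.
move=> /countable_injP [f finj].
pose v i := match pselect (exists a, A a /\ f a = i) with
            | left h => sval (cid h) | right _ => a0 end.
exists v; split.
  move=> i; rewrite /v; case: pselect => [h|_]; last by right.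
  by left; case: (svalP (cid h)).
move=> a Aa; exists (f a); rewrite /v; case: pselect => [h|hn]; last first.
  by exfalso; apply: hn; exists a.
case: (svalP (cid h)) => h1 h2; apply: finj => //; by rewrite inE.
Qed.

Section Main.
Variables (R : realType) (E : VL R) (F : set E) (NF : set (set E)).
Hypotheses (hI : is_ideal F) (hD : order_dense F) (hL : o_Lebesgue_in F NF).
Local Notation le := (@vl_le R E).
Local Notation jn := (@vl_join R E).
Local Notation mt := (@vl_meet R E).
Local Notation ab := (@vl_abs R E).

Lemma F0 : F 0. Proof. by case: hI. Qed.
Lemma FD x y : F x -> F y -> F (x + y). Proof. by case: hI => _ h _ _; apply: h. Qed.
Lemma FZ (a : R) x : F x -> F (a *: x). Proof. by case: hI => _ _ h _; apply: h. Qed.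
Lemma Fsol x y : F y -> le (ab x) (ab y) -> F x. Proof. by case: hI => _ _ _ h; apply: h. Qed.
Lemma FN x : F x -> F (- x). Proof. by move=> h; rewrite -scaleN1r; apply: FZ. Qed.
Lemma FB x y : F x -> F y -> F (x - y). Proof. by move=> h1 h2; apply: FD => //; apply: FN. Qed.
Lemma Fabs x : F x -> F (ab x). Proof. by move=> h; apply: (Fsol h); rewrite abs_abs; apply: lexx. Qed.
Lemma Fpos x y : F y -> le 0 x -> le x (ab y) -> F x.
Proof. by move=> hy h0 h; apply: (Fsol hy); rewrite abs_pos. Qed.
Lemma Fmeet x y : F y -> F (mt (ab x) (ab y)).
Proof. by move=> h; apply: (Fpos h); [apply: meet_abs_ge0|apply: meet_r]. Qed.

Let LT := hL.1.
Lemma NFex : exists U, NF U. Proof. by have [h _] := LT. Qed.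
Lemma NFsub U : NF U -> U `<=` F. Proof. by have [_ [h _]] := LT; apply: h. Qed.
Lemma NFup U V : NF U -> U `<=` V -> V `<=` F -> NF V.
Proof. by have [_ [_ [h _]]] := LT; apply: h. Qed.
Lemma NFI U V : NF U -> NF V -> NF (U `&` V).
Proof. by have [_ [_ [_ [h _]]]] := LT; apply: h. Qed.
Lemma NFabsorb U : NF U -> forall x, F x ->
     exists e : R, 0 < e /\ forall t : R, `|t| <= e -> U (t *: x).
Proof. by have [_ [_ [_ [_ [h _]]]]] := LT; apply: h. Qed.
Lemma NFadd U : NF U -> exists V, NF V /\ forall x y, V x -> V y -> U (x + y).
Proof. by have [_ [_ [_ [_ [_ [_ [h _]]]]]]] := LT; apply: h. Qed.
Lemma NFsolid U : NF U -> exists V, [/\ NF V, solid_in F V & V `<=` U].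
Proof. by have [_ [_ [_ [_ [_ [_ [_ [h _]]]]]]]] := LT; apply: h. Qed.
Lemma NFhaus x : F x -> (forall U, NF U -> U x) -> x = 0.
Proof. by have [_ [_ [_ [_ [_ [_ [_ [_ h]]]]]]]] := LT; apply: h. Qed.
Lemma NF0 U : NF U -> U 0.
Proof.
move=> hU; have [e [e0 he]] := NFabsorb hU F0.
by have := he 0; rewrite scale0r normr0 => /(_ (ltW e0)).
Qed.
Lemma NFhalf U : NF U -> exists V, [/\ NF V, solid_in F V & forall x y, V x -> V y -> U (x + y)].
Proof.
move=> /NFadd [V1 [h1 h2]]; have [V [hV sV sub]] := NFsolid h1.
by exists V; split => // x y /sub hx /sub hy; apply: h2.
Qed.

Lemma solid_abs V x : solid_in F V -> V x -> V (ab x).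
Proof. by move=> [s1 s2] hx; apply: s2 (Fabs (s1 _ hx)) hx _; rewrite abs_abs; apply: lexx. Qed.
Lemma solid_opp V x : solid_in F V -> V x -> V (- x).
Proof. by move=> [s1 s2] hx; apply: s2 (FN (s1 _ hx)) hx _; rewrite abs_opp; apply: lexx. Qed.
Lemma solid_le V x y : solid_in F V -> V y -> le 0 x -> le x (ab y) -> V x.
Proof.
move=> [s1 s2] hy h0 h; apply: (s2 _ _ _ hy) => //; first exact: Fpos (s1 _ hy) h0 h.
by rewrite abs_pos.
Qed.

Definition nseq (V : nat -> set E) :=
  [/\ forall n, NF (V n), forall n, solid_in F (V n) &
      forall n x y, V n.+1 x -> V n.+1 y -> V n (x + y)].
Definition Nset (V : nat -> set E) : set E := [set z | forall n, V n z].

Lemma nseq_decr V n : nseq V -> V n.+1 `<=` V n.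
Proof. by move=> [h1 _ h3] x hx; rewrite -[x]addr0; apply: h3 => //; apply: NF0. Qed.
Lemma nseq_decr_le V n m : nseq V -> (n <= m)%N -> V m `<=` V n.
Proof.
move=> hV /subnK <-; elim: (m - n)%N => [|k ih]; first by [].
by rewrite addSn => x /(nseq_decr hV) /ih.
Qed.
Lemma Nset_solid V : nseq V -> solid_in F (Nset V).
Proof.
move=> [h1 h2 h3]; split; first by move=> x hx; apply: (NFsub (h1 0)); apply: hx.
by move=> x y hx hy hle n; have [_ s] := h2 n; apply: s hx (hy n) hle.
Qed.
Lemma Nset_add V x y : nseq V -> Nset V x -> Nset V y -> Nset V (x + y).
Proof. by move=> [_ _ h3] hx hy n; apply: h3. Qed.
Lemma Nset0 V : nseq V -> Nset V 0.
Proof. by move=> [h1 _ _] n; apply: NF0. Qed.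
Lemma Nset_F V : nseq V -> Nset V `<=` F.
Proof. by move=> [h1 _ _] x hx; apply: (NFsub (h1 0)); apply: hx. Qed.

Lemma nseq_exists (B : nat -> set E) : (forall n, NF (B n)) ->
  exists V, nseq V /\ forall n, V n `<=` B n.
Proof.
move=> hB.
have hstep : forall p : nat * set E, exists W : set E,
    NF p.2 -> [/\ NF W, solid_in F W, W `<=` B p.1.+1 &
       forall x y, W x -> W y -> p.2 (x + y)].
  move=> [n U] /=; have [hU|hU] := pselect (NF U); last by exists set0.
  have [V [hV sV hVV]] := NFhalf hU.
  have [W [hW sW sub]] := NFsolid (NFI hV (hB n.+1)).
  by exists W => _; split => // [x /sub []//|x y /sub [hx _] /sub [hy _]]; apply: hVV.
have [g' hg'] := choice hstep.
pose g n U := g' (n, U).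
have hg : forall n U, NF U -> [/\ NF (g n U), solid_in F (g n U), g n U `<=` B n.+1 &
       forall x y, g n U x -> g n U y -> U (x + y)] by move=> n U; apply: (hg' (n, U)).
have [W0 [hW0 sW0 sub0]] := NFsolid (hB 0).
pose V := fix V n := if n is k.+1 then g k (V k) else W0.
have hNF : forall n, NF (V n).
  by elim=> [|n ih] //=; have [] := hg n (V n) ih.
exists V; split; first split.
- exact: hNF.
- by case=> [|n] //=; have [] := hg n (V n) (hNF n).
- by move=> n x y /= hx hy; have [_ _ _] := hg n (V n) (hNF n); apply.
- by case=> [|n] //=; have [] := hg n (V n) (hNF n).
Qed.

Lemma nseq_combine (S : nat -> nat -> set E) : (forall i, nseq (S i)) ->
  exists V, nseq V /\ forall i, Nset V `<=` Nset (S i).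
Proof.
move=> hS.
pose V n := [set z | forall i, (i <= n)%N -> S i n z].
have hF n : V n `<=` F.
  by move=> z hz; have [h1 _ _] := hS 0%N; apply: (NFsub (h1 n)); apply: hz.
have hNF : forall n, NF (V n).
  move=> n; suff : forall m, NF [set z | forall i, (i <= m)%N -> S i n z].
    by apply.
  elim=> [|m ih].
    have [h1 _ _] := hS 0%N; apply: NFup (h1 n) _ _.
      by move=> z hz i; rewrite leqn0 => /eqP ->.
    by move=> z hz; apply: (NFsub (h1 n)); apply: hz.
  have [h1 _ _] := hS m.+1; apply: NFup (NFI ih (h1 n)) _ _.
    move=> z [hz1 hz2] i; rewrite leq_eqVlt => /orP[/eqP->//|]; rewrite ltnS.
    exact: hz1.
  by move=> z hz; apply: (NFsub (h1 n)); apply: hz.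
exists V; split; first split.
- exact: hNF.
- move=> n; split; first exact: hF.
  move=> x y hx hy hle i hi; have [_ h2 _] := hS i.
  by have [_ s] := h2 n; apply: s hx (hy i hi) hle.
- move=> n x y hx hy i hi; have [_ _ h3] := hS i.
  by apply: h3; [apply: hx|apply: hy]; apply: leqW.
- move=> i z hz n; have [hn|hn] := leqP i n; first exact: hz.
  apply: (nseq_decr_le (hS i) (ltnW hn)); exact: hz.
Qed.

Definition carrF (v : E) := exists V, nseq V /\ forall n, Nset V n -> mt (ab v) (ab n) = 0.

Lemma meet0l (a : E) : le 0 a -> mt 0 a = 0.
Proof. by move=> h; apply: meet_id. Qed.

Lemma carrF0 : carrF 0.
Proof.
have [U hU] := NFex; have [V [hV _]] := nseq_exists (fun _ => hU).
by exists V; split => // n _; rewrite abs0 meet0l //; apply: abs_ge0.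
Qed.

Lemma meet_zero_le (a b c : E) : le 0 a -> le a b -> mt b c = 0 -> le 0 c -> mt a c = 0.
Proof.
move=> ha hab hb hc; apply: le_anti; last exact: meet_pos.
by rewrite -hb; apply: meet_mono => //; apply: lexx.
Qed.

Lemma carrF_add u v : carrF u -> carrF v -> carrF (u + v).
Proof.
move=> [V1 [h1 d1]] [V2 [h2 d2]].
have hS : forall i, nseq (if i is 0 then V1 else V2) by case.
have [V [hV sub]] := nseq_combine hS.
exists V; split => // n hn.
apply: le_anti; last exact: meet_abs_ge0.
have := meet_abs_tri u v (abs_ge0 n).
by rewrite (d1 n (sub 0%N _ hn)) (d2 n (sub 1%N _ hn)) addr0.
Qed.

Lemma carrF_dense w : F w -> le 0 w -> w <> 0 ->
  exists t, [/\ F t, carrF t, le 0 t, t <> 0 & le t w].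
Proof.
move=> hw w0 wn0.
have [U [hU nUw]] : exists U, NF U /\ ~ U w.
  apply/not_existsP => hn; apply: wn0; apply: NFhaus => // U hU.
  by apply: contrapT => hnU; apply: (hn U); split.
have [V [hV sub]] := nseq_exists (fun _ : nat => hU).
have [//|nt] := pselect (exists t, [/\ F t, carrF t, le 0 t, t <> 0 & le t w]).
exfalso; apply: nUw; apply: (sub 0%N).
pose D : set E := [set d | [/\ Nset V d, le 0 d & le d w]].
have D0 : D 0 by split; [apply: Nset0|apply: lexx|].
pose T := {d : E | D d}.
pose leT (a b : T) := le (sval a) (sval b).
pose t0 : T := exist _ 0 D0.
have dirT : directed leT.
  split; [by exists t0|by move=> a; apply: lexx|by move=> a b c; apply: le_tr|].
  move=> [a [a1 a2 a3]] [b [b1 b2 b3]].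
  have hj : D (jn a b).
    split; last by apply: join_lub.
    - apply: (solid_le (Nset_solid hV) (Nset_add hV a1 b1)).
        exact: le_tr a2 (join_l _ _).
      rewrite abs_pos; last exact: le_add_pos.
      by apply: join_lub; [apply: le_add0|rewrite addrC; apply: le_add0].
    - exact: le_tr a2 (join_l _ _).
  by exists (exist _ _ hj); split; [apply: join_l|apply: join_r].
have hFT (a : T) : F (sval a).
  by have [a1 _ _] := svalP a; apply: Nset_F hV _ a1.
have hoc : oconv_in F leT (fun a : T => sval a) w.
  exists T, leT, (fun b : T => w - sval b); split => //.
  split; first by move=> b; apply: FB.
  split; first by move=> b1 b2 h; apply: le_addl; apply: le_opp.
  split; first by move=> b; have [_ _ b3] := svalP b; apply: le_subl.
  split; last first.
    move=> b0; exists b0 => a ha; rewrite abs_sub abs_pos; last first.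
      by have [_ _ a3] := svalP a; apply: le_subl.
    by apply: le_addl; apply: le_opp.
  move=> z hz hzb.
  pose p := jn 0 z.
  have hp : forall b : T, le p (w - sval b).
    by move=> b; apply: pos_part_le => //; have [_ _ b3] := svalP b; apply: le_subl.
  suff p0 : p = 0 by rewrite -p0; apply: le_pos_part.
  apply: contrapT => pn0.
  have p0 : le 0 p by apply: pos_part_ge0.
  have pw : le p w by have := hp t0; rewrite /= subr0.
  have Fp : F p by apply: Fpos hw p0 _; rewrite abs_pos.
  have [n [hn qn0]] : exists n, Nset V n /\ mt (ab p) (ab n) <> 0.
    apply/not_existsP => hn; apply: nt; exists p; split => //.
    exists V; split => // n Nn; apply: contrapT => hne.
    by apply: (hn n); split.
  pose q := mt (ab p) (ab n).
  have q0 : le 0 q by apply: meet_abs_ge0.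
  have qp : le q p by apply: le_tr (meet_l _ _) _; rewrite abs_pos //; apply: lexx.
  have Nq : Nset V q by apply: (solid_le (Nset_solid hV) hn q0); apply: meet_r.
  have hj : forall j, D (q *+ j).
    elim=> [|j ih]; first by rewrite mulr0n.
    rewrite mulrSr; split.
    - by apply: Nset_add => //; case: ih.
    - by apply: le_add_pos => //; case: ih.
    - have := hp (exist _ _ ih) => /= h.
      apply: le_tr (le_addl _ (le_tr qp h)) _; rewrite addrC subrK; apply: lexx.
  apply: qn0; apply: (@archi R E q w q0) => j; by case: (hj j).
have htc := hL.2 T leT (fun a : T => sval a) w dirT hFT hw hoc.
have [hNF hsol hnorm] := hV.
have [a0 ha0] := htc _ (hNF 1%N).
have h1 := ha0 a0 (lexx _).
have h2 : V 1%N (sval a0) by have [a1 _ _] := svalP a0; apply: a1.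
by have := hnorm 0%N _ _ h2 (solid_opp (hsol 1%N) h1); rewrite opprB addrC subrK.
Qed.

Lemma le_scale_l (a b : R) (v : E) : le 0 v -> a <= b -> le (a *: v) (b *: v).
Proof.
move=> hv hab; apply/le_subP; rewrite -scalerBl.
by have := le_scale (_ : 0 <= b - a) hv; rewrite scaler0; apply; rewrite subr_ge0.
Qed.

Lemma sup_carr x : is_sup_of [set v | [/\ F v, carrF v, le 0 v & le v (ab x)]] (ab x).
Proof.
split; first by move=> d [].
move=> b hb.
pose b' := mt b (ab x).
have [e0|en0] := pselect (ab x - b' = 0).
  by move/eqP: e0; rewrite subr_eq0 => /eqP ->; apply: meet_l.
have he : le 0 (ab x - b') by apply: le_subl; apply: meet_r.
have [w [Fw w0 wn0 we]] := hD he en0.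
have [t [Ft ct t0 tn0 tw]] := carrF_dense Fw w0 wn0.
have hj : forall j, [/\ F (t *+ j), carrF (t *+ j), le 0 (t *+ j) & le (t *+ j) (ab x)].
  elim=> [|j [h1 h2 h3 h4]]; first by rewrite mulr0n; split; [apply: F0|apply: carrF0|apply: lexx|apply: abs_ge0].
  rewrite mulrSr; split.
  - exact: FD.
  - exact: carrF_add.
  - exact: le_add_pos.
  - have hb' : le (t *+ j) b' by apply: meet_glb => //; apply: hb.
    apply: le_tr (le_add hb' (le_tr tw we)) _.
    by rewrite addrC subrK; apply: lexx.
by exfalso; apply: tn0; apply: (@archi R E t (ab x) t0) => j; case: (hj j).
Qed.

Definition Ub (V : set E) (y : E) : set E := [set x | V (mt (ab x) (ab y))].

Lemma uF_Ub V y : NF V -> solid_in F V -> F y -> uF F NF (Ub V y).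
Proof. by move=> h1 h2 h3; exists V, y; split. Qed.

Lemma Ub_solid V y x z : solid_in F V -> Ub V y z -> le (ab x) (ab z) -> Ub V y x.
Proof.
move=> sV hz hle; apply: (solid_le sV hz); first exact: meet_abs_ge0.
by rewrite abs_meet; apply: meet_mono => //; apply: lexx.
Qed.

Lemma natle_dir : directed (fun m n : nat => (m <= n)%N).
Proof.
split; [by exists 0%N|by []|by move=> a b c; apply: leq_trans|].
by move=> a b; exists (maxn a b); rewrite leq_maxl leq_maxr.
Qed.

Lemma absorb_Ub V y x : NF V -> solid_in F V -> F y ->
  exists e : R, 0 < e /\ forall t : R, `|t| <= e -> V (mt (ab (t *: x)) (ab y)).
Proof.
move=> hV sV hy.
pose c (n : nat) : R := (n.+1%:R)^-1.
have c0 n : 0 <= c n by rewrite invr_ge0.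
have cdec m n : (m <= n)%N -> c n <= c m.
  by move=> h; rewrite lef_pV2 ?posrE // ler_nat ltnS.
pose s n := mt (ab (c n *: x)) (ab y).
have s0 n : le 0 (s n) by apply: meet_abs_ge0.
have sdec m n : (m <= n)%N -> le (s n) (s m).
  move=> h; apply: meet_mono; last exact: lexx.
  rewrite !absZ !ger0_norm //; exact: le_scale_l (abs_ge0 _) (cdec _ _ h).
have Fs n : F (s n) by apply: Fmeet.
have hoc : oconv_in F (fun m n : nat => (m <= n)%N) s 0.
  exists nat, (fun m n : nat => (m <= n)%N), s; split; first exact: natle_dir.
  split => //; split => //; split => //; split; last first.
    by move=> b0; exists b0 => a ha; rewrite subr0 abs_pos //; apply: sdec.
  move=> z hz hzb; pose p := jn 0 z.
  suff p0 : p = 0 by rewrite -p0; apply: le_pos_part.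
  apply: (@archi R E p (ab x)); first exact: pos_part_ge0.
  case=> [|j]; first by rewrite mulr0n; apply: abs_ge0.
  have h1 : le p (s j) by apply: pos_part_le => //; apply: hzb.
  have h2 : le p (c j *: ab x).
    apply: le_tr h1 _; apply: le_tr (meet_l _ _) _.
    by rewrite absZ ger0_norm //; apply: lexx.
  have := le_scale (_ : 0 <= j.+1%:R :> R) h2.
  rewrite scalerA mulfV ?pnatr_eq0 // scale1r scaler_nat; apply; exact: ler0n.
have [n0 hn0] := hL.2 nat _ s 0 natle_dir Fs F0 hoc V hV.
exists (c n0); split; first by rewrite invr_gt0.
move=> t ht; have hs := hn0 n0 (leqnn _); rewrite subr0 in hs.
apply: (solid_le sV hs); first exact: meet_abs_ge0.
rewrite (abs_pos (s0 n0)); apply: meet_mono; last exact: lexx.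
rewrite !absZ (ger0_norm (c0 n0)); exact: le_scale_l (abs_ge0 _) ht.
Qed.

Lemma uF_top : is_loc_solid_top setT (uF F NF).
Proof.
split.
  have [U0 hU0] := NFex; have [V [hV sV _]] := NFsolid hU0.
  by exists setT, V, 0; split => //; apply: F0.
split; first by [].
split; first by move=> U W [V [y [h1 h2 h3 h4]]] hUW _; exists V, y; split => //; apply: subset_trans hUW.
split.
  move=> U1 U2 [V1 [y1 [hV1 sV1 hy1 sub1]]] [V2 [y2 [hV2 sV2 hy2 sub2]]].
  have [V [hV sV sub]] := NFsolid (NFI hV1 hV2).
  have hy : F (ab y1 + ab y2) by apply: FD; apply: Fabs.
  have hyy : ab (ab y1 + ab y2) = ab y1 + ab y2 by apply: abs_pos; apply: le_add_pos; apply: abs_ge0.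
  exists V, (ab y1 + ab y2); split => // x hx; have [hx1 hx2] := sub _ hx; split.
  - apply: sub1; apply: (solid_le sV1 hx1); first exact: meet_abs_ge0.
    rewrite abs_meet; apply: meet_mono; first exact: lexx.
    by rewrite hyy; apply: le_add0; apply: abs_ge0.
  - apply: sub2; apply: (solid_le sV2 hx2); first exact: meet_abs_ge0.
    rewrite abs_meet; apply: meet_mono; first exact: lexx.
    by rewrite hyy addrC; apply: le_add0; apply: abs_ge0.
split.
  move=> U [V [y [hV sV hy sub]]] x _.
  have [e [e0 he]] := absorb_Ub x hV sV hy.
  by exists e; split => // t ht; apply: sub; apply: he.
split.
  move=> U [V [y [hV sV hy sub]]]; exists (Ub V y); split => //; first exact: uF_Ub.
  move=> x t hx ht; apply: Ub_solid sV hx _.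
  rewrite absZ; have := le_scale_l (abs_ge0 x) ht; by rewrite scale1r.
split.
  move=> U [V [y [hV sV hy sub]]].
  have [V' [hV' sV' hVV]] := NFhalf hV.
  exists (Ub V' y); split; first exact: uF_Ub.
  move=> x1 x2 h1 h2; apply: sub; apply: (solid_le sV (hVV _ _ h1 h2)).
    exact: meet_abs_ge0.
  rewrite [ab (mt _ _ + mt _ _)]abs_pos; first exact: meet_abs_tri (abs_ge0 _).
  by apply: le_add_pos; apply: meet_abs_ge0.
split.
  move=> U [V [y [hV sV hy sub]]]; exists (Ub V y); split => //; first exact: uF_Ub.
  by split => // x z _ hz hle; apply: Ub_solid sV hz hle.
move=> x _ hx; apply: contrapT => xn0.
have a0 : le 0 (ab x) by apply: abs_ge0.
have an0 : ab x <> 0 by move=> /abs_eq0.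
have [w [Fw w0 wn0 wx]] := hD a0 an0.
have [U [hU nUw]] : exists U, NF U /\ ~ U w.
  apply/not_existsP => hn; apply: wn0; apply: NFhaus => // U hU.
  by apply: contrapT => hnU; apply: (hn U); split.
have [V [hV sV sub]] := NFsolid hU.
have := hx _ (uF_Ub hV sV Fw); rewrite /Ub /= (abs_pos w0) meetC meet_id //.
by move/sub.
Qed.

Lemma uF_uoL : uo_Lebesgue_in setT (uF F NF).
Proof.
split; first exact: uF_top.
move=> A leA x l dir _ _ huo U [V [y [hV sV hy sub]]].
have [B [leB [yb [dB [_ [ybd [yb0 [ybinf ybev]]]]]]]] := huo y I.
pose m a := mt (ab (x a - l)) (ab y).
have hoc : oconv_in F leA m 0.
  exists B, leB, (fun b => mt (yb b) (ab y)); split => //.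
  split; first by move=> b; apply: (Fpos hy); [apply: meet_pos => //; apply: abs_ge0|apply: meet_r].
  split; first by move=> b1 b2 h; apply: meet_mono; [apply: ybd|apply: lexx].
  split; first by move=> b; apply: meet_pos => //; apply: abs_ge0.
  split.
    move=> z hz hzb; apply: ybinf => // b; apply: le_tr (hzb b) _; apply: meet_l.
  move=> b0; have [a0 ha0] := ybev b0; exists a0 => a ha.
  have := ha0 a ha; rewrite !subr0 abs_meet => h.
  by apply: meet_glb => //; apply: meet_r.
have Fm a : F (m a) by apply: Fmeet.
have [a0 ha0] := hL.2 A leA m 0 dir Fm F0 hoc V hV.
by exists a0 => a ha; apply: sub; have := ha0 a ha; rewrite subr0.
Qed.

Lemma carrier_of x (v : nat -> E) :
  (forall i, [/\ F (v i), carrF (v i) & le 0 (v i)]) ->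
  (forall z, (forall i, mt (ab z) (v i) = 0) -> mt (ab z) (ab x) = 0) ->
  carrier (uF F NF) x.
Proof.
move=> hv hP.
have hS : forall i, exists S, nseq S /\ forall n, Nset S n -> mt (ab (v i)) (ab n) = 0.
  by move=> i; have [_ h _] := hv i.
have [S hS'] := choice hS.
have [V [hV subV]] := nseq_combine (fun i => (hS' i).1).
pose y := fix y n := if n is k.+1 then y k + v k.+1 else v 0%N.
have y0 n : le 0 (y n) by elim: n => [|n ih] /=; [case: (hv 0%N)|apply: le_add_pos => //; case: (hv n.+1)].
have Fy n : F (y n) by elim: n => [|n ih] /=; [case: (hv 0%N)|apply: FD => //; case: (hv n.+1)].
have yinc n : le (y n) (y n.+1) by rewrite /=; apply: le_add0; case: (hv n.+1).
have yinc_le n m : (n <= m)%N -> le (y n) (y m).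
  move=> /subnK <-; elim: (m - n)%N => [|k ih]; first exact: lexx.
  by rewrite addSn; apply: le_tr ih (yinc _).
have vy i : le (v i) (y i).
  case: i => [|i] /=; first exact: lexx.
  by rewrite addrC; apply: le_add0.
have yperp n m : Nset V m -> mt (ab (y n)) (ab m) = 0.
  move=> hm; elim: n => [|n ih] /=.
    exact: (hS' 0%N).2 _ (subV 0%N _ hm).
  apply: le_anti; last exact: meet_abs_ge0.
  have := meet_abs_tri (y n) (v n.+1) (abs_ge0 m).
  by rewrite ih ((hS' n.+1).2 _ (subV n.+1 _ hm)) addr0.
have [hNF hsol hnorm] := hV.
have yabs n : ab (y n) = y n by apply: abs_pos.
exists (fun n => Ub (V n) (y n)); split.
- by move=> n; apply: uF_Ub.
- by move=> n; split => // a b _ hb hab; apply: Ub_solid (hsol n) hb hab.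
- move=> n a b ha hb; rewrite /Ub /=.
  have := hnorm n _ _ ha hb => hs.
  apply: (solid_le (hsol n) hs); first exact: meet_abs_ge0.
  rewrite [ab (mt _ _ + mt _ _)]abs_pos; last by apply: le_add_pos; apply: meet_abs_ge0.
  apply: le_tr (meet_abs_tri a b (abs_ge0 _)).
  by apply: meet_mono; [apply: lexx|rewrite !yabs].
split => // z hz; rewrite /disj meetC.
have hzn n : V n (mt (ab z) (ab (y n))) by apply: hz.
have hN k : Nset V (mt (ab z) (y k)).
  move=> n; have [hkn|hkn] := leqP n k.
    by apply: (nseq_decr_le hV hkn); have := hzn k; rewrite yabs.
  apply: (solid_le (hsol n) (hzn n)); first by apply: meet_pos => //; apply: abs_ge0.
  rewrite abs_meet yabs; apply: meet_mono; first exact: lexx.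
  exact: yinc_le (ltnW hkn).
have hzk k : mt (ab z) (y k) = 0.
  have := yperp k _ (hN k); rewrite yabs abs_pos; last by apply: meet_pos => //; apply: abs_ge0.
  by rewrite meetC meet_id //; apply: meet_r.
apply: hP => i; rewrite meetC.
apply: (@meet_zero_le (v i) (y i) (ab z)); [by case: (hv i)|exact: vy|by rewrite meetC hzk|exact: abs_ge0].
Qed.

Lemma carrier_csp x : countable_sup_property E -> carrier (uF F NF) x.
Proof.
move=> csp; have [D' [sub cD supD]] := csp _ _ (sup_carr x).
have [v [hv1 hv2]] := enum_countable 0 cD.
apply: (carrier_of (v := v)).
  move=> i; case: (hv1 i) => [/sub [h1 h2 h3 _]|->]; first by split.
  by split; [apply: F0|apply: carrF0|apply: lexx].
move=> z hz; pose c := mt (ab z) (ab x).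
have c0 : le 0 c by apply: meet_abs_ge0.
have hub : forall d, D' d -> le d (ab x - c).
  move=> d Dd; have [i vi] := hv2 d Dd; have [_ _ d0 dx] := sub d Dd.
  have hzd : mt (ab z) d = 0 by rewrite -vi; apply: hz.
  have hcd : mt c d = 0 by apply: (meet_zero_le c0 (meet_l _ _) hzd d0).
  have hs : le (d + c) (ab x).
    by rewrite -disj_sum; [apply: join_lub => //; apply: meet_r|rewrite meetC].
  by have := le_addr (- c) hs; rewrite addrK.
have := supD.2 _ hub => /le_subP; rewrite addrAC subrr add0r => /le_opp.
rewrite opprK oppr0 => hc.
by apply: le_anti.
Qed.

Lemma metric_nseq : metrisable_in F NF -> exists V, nseq V /\ forall z, Nset V z -> z = 0.
Proof.
move=> [d [d0 dd dsym dtri dopen]].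
have dxx z : F z -> d z z = 0 by move=> hz; apply/(dd z z hz hz).
have hB : forall n : nat, exists U, NF U /\ U `<=` [set y | F y /\ d 0 y < (n.+1%:R)^-1].
  move=> n; pose r : R := (n.+1%:R)^-1.
  have r0 : 0 < r by rewrite invr_gt0.
  pose O := [set y | F y /\ d 0 y < r].
  have hsub : O `<=` F by move=> y [].
  have hO : top_open_in F NF O.
    apply: (proj2 (dopen O hsub)) => x [Fx dx].
    exists (r - d 0 x); split; first by rewrite subr_gt0.
    move=> y [Fy dy]; split => //.
    have := dtri 0 x y F0 Fx Fy; lra.
  have d00 : d 0 0 < r by rewrite dxx //; apply: F0.
  have [U [hU hUO]] := hO.2 0 (conj F0 d00).
  exists U; split => // u hu.
  by have := hUO (0 + u) (ex_intro2 _ _ u hu erefl); rewrite add0r.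
have [B hBp] := choice hB.
have [V [hV subV]] := nseq_exists (fun n => (hBp n).1).
exists V; split => // z hz.
have Fz : F z by apply: Nset_F hV _ hz.
have hdz n : d 0 z < (n.+1%:R)^-1 by have [] := (hBp n).2 _ (subV n _ (hz n)).
have dz0 : d 0 z = 0.
  apply: contrapT => hne.
  have e0 : 0 < d 0 z by rewrite lt_neqAle eq_sym; apply/andP; split; [apply/eqP|apply: d0 => //; apply: F0].
  have ei : 0 <= (d 0 z)^-1 by rewrite invr_ge0 ltW.
  have hb := Num.Theory.archi_boundP ei.
  set n := Num.bound _ in hb.
  have h1 := hdz n.
  have h2 : (n.+1%:R)^-1 < d 0 z.
    rewrite -[d 0 z]invrK ltf_pV2 ?posrE ?invr_gt0 //.
    by apply: lt_trans hb _; rewrite ltr_nat.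
  by have := lt_trans h1 h2; rewrite ltxx.
by have := (dd 0 z F0 Fz).1 dz0.
Qed.

Lemma carrier_basis x : metrisable_in F NF -> has_countable_order_basis_in F ->
  carrier (uF F NF) x.
Proof.
move=> hm [A [[AF An0 Ab] cA]].
have [V [hV hV0]] := metric_nseq hm.
have carr a : carrF a.
  exists V; split => // n /hV0 ->; rewrite abs0 meetC meet0l //; apply: abs_ge0.
have [v [hv1 hv2]] := enum_countable 0 cA.
apply: (carrier_of (v := fun i => ab (v i))).
  move=> i; split; [apply: Fabs|apply: carr|apply: abs_ge0].
  by case: (hv1 i) => [/AF //|->]; apply: F0.
move=> z hz.
suff -> : z = 0 by rewrite abs0 meet0l //; apply: abs_ge0.
apply: contrapT => zn0.
have a0 : le 0 (ab z) by apply: abs_ge0.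
have an0 : ab z <> 0 by move=> /abs_eq0.
have [w [Fw w0 wn0 wz]] := hD a0 an0.
apply: wn0; apply: Ab; split => // a Aa.
have [i vi] := hv2 a Aa.
rewrite /disj (abs_pos w0); apply: (meet_zero_le w0 wz _ (abs_ge0 _)).
by rewrite -vi; apply: hz.
Qed.

Definition tailb (u : nat -> E) (n : nat) (b : E) := le 0 b /\ forall k, (n <= k)%N -> le (u k) b.

Lemma arch_tail (u : nat -> E) n b0 c : le 0 c -> tailb u n b0 ->
  (forall b, tailb u n b -> tailb u n (b - c)) -> c = 0.
Proof.
move=> c0 hb0 hstep.
have hi : forall i, tailb u n (b0 - c *+ i).
  by elim=> [|i ih]; [rewrite mulr0n subr0|rewrite mulrSr opprD addrA; apply: hstep].
apply: (@archi R E c b0 c0) => i; have [h _] := hi i.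
by have := le_addr (c *+ i) h; rewrite add0r subrK.
Qed.

Definition psum (u : nat -> E) (n j : nat) : E := \sum_(i < j.+1) u (n + i)%N.

Lemma psum_recr u n j : psum u n j.+1 = psum u n j + u (n + j.+1)%N.
Proof. by rewrite /psum big_ord_recr. Qed.
Lemma psum_recl u n j : psum u n j.+1 = u n + psum u n.+1 j.
Proof.
rewrite /psum big_ord_recl addn0; congr (_ + _); apply: eq_bigr => i _.
rewrite lift0.
by rewrite addnS addSn.
Qed.
Lemma psum_ge0 u n j : (forall k, le 0 (u k)) -> le 0 (psum u n j).
Proof.
move=> h; elim: j => [|j ih]; first by rewrite /psum big_ord1 addn0.
by rewrite psum_recr; apply: le_add_pos.
Qed.
Lemma psum_ge u n j k : (forall k, le 0 (u k)) -> (n <= k <= n + j)%N -> le (u k) (psum u n j).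
Proof.
move=> h; elim: j => [|j ih].
  by rewrite addn0 -eqn_leq => /eqP ->; rewrite /psum big_ord1 addn0; apply: lexx.
rewrite psum_recr => /andP [h1 h2]; move: h2; rewrite leq_eqVlt => /orP[/eqP ->|].
  by rewrite addrC; apply: le_add0; apply: psum_ge0.
rewrite addnS ltnS => h2; apply: le_tr (ih _) _; first by rewrite h1.
exact: le_add0.
Qed.
Lemma psum_inc u n j : (forall k, le 0 (u k)) -> le (psum u n j) (psum u n j.+1).
Proof. by move=> h; rewrite psum_recr; apply: le_add0. Qed.
Lemma psum_inc_le u n j j' : (forall k, le 0 (u k)) -> (j <= j')%N -> le (psum u n j) (psum u n j').
Proof.
move=> h /subnK <-; elim: (j' - j)%N => [|k ih]; first exact: lexx.
by rewrite addSn; apply: le_tr ih (psum_inc _ _ _).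
Qed.

Lemma psum_in (D : nat -> set E) (u : nat -> E) :
  normal_seq D -> (forall n, D n.+1 `<=` D n) -> (forall k, D k (u k)) ->
  forall j n, D n (psum u n.+1 j).
Proof.
move=> hn hdec hu; elim=> [|j ih] n.
  by rewrite /psum big_ord1 addn0; apply: hdec.
by rewrite psum_recl; apply: hn; [apply: hu|apply: ih].
Qed.

Lemma uF0 U : uF F NF U -> U 0.
Proof.
move=> [V [y [hV sV hy sub]]]; apply: sub; rewrite /= abs0 meet0l; last exact: abs_ge0.
exact: NF0.
Qed.

Lemma uo_of_normal (D : nat -> set E) (z : nat -> E) :
  (forall n, uF F NF (D n)) -> (forall n, solid_in setT (D n)) -> normal_seq D ->
  (forall n, D n (z n)) ->
  (forall k w, (forall n, D n w) -> mt (ab (z k)) (ab w) = 0) ->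
  forall y, oconv_in setT nat_le (fun n => mt (ab (z n)) (ab y)) 0.
Proof.
move=> huF hsol hnorm hz hperp y.
have Dsol m a b : D m a -> le 0 b -> le b (ab a) -> D m b.
  move=> ha hb hba; have [_ s] := hsol m; apply: (s b a I ha).
  by rewrite (abs_pos hb).
have Ddec n : D n.+1 `<=` D n.
  by move=> a ha; rewrite -[a]addr0; apply: hnorm => //; apply: uF0.
pose u k := mt (ab (z k)) (ab y).
have u0 k : le 0 (u k) by apply: meet_abs_ge0.
have uin k : D k (u k) by apply: (Dsol _ _ _ (hz k) (u0 k)); apply: meet_l.
have uy k : le (u k) (ab y) by apply: meet_r.
pose B := {p : nat * E | tailb u p.1 p.2}.
pose leB (p q : B) := le (sval q).2 (sval p).2.
have tb0 : tailb u 0 (ab y) by split => [|k _]; [apply: abs_ge0|apply: uy].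
exists B, leB, (fun p => (sval p).2); split.
  split; [by exists (exist _ (0%N, ab y) tb0)|by move=> p; apply: lexx|by move=> p q r h1 h2; apply: le_tr h2 h1|].
  move=> [[n1 b1] [h1 h1']] [[n2 b2] [h2 h2']].
  have ht : tailb u (maxn n1 n2) (mt b1 b2).
    split; first exact: meet_pos.
    move=> k; rewrite geq_max => /andP [k1 k2]; apply: meet_glb; [exact: h1'|exact: h2'].
  by exists (exist _ (maxn n1 n2, mt b1 b2) ht); split; [apply: meet_l|apply: meet_r].
split => //.
split; first by move=> p q.
split; first by move=> p; case: (svalP p).
split; last first.
  move=> p; exists (sval p).1 => a ha; rewrite subr0 (abs_pos (u0 a)).
  by case: (svalP p) => _; apply.
move=> z' _ hz'.
pose w := jn 0 z'.
have w0 : le 0 w by apply: pos_part_ge0.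
have hwb n b : tailb u n b -> le w b.
  by move=> h; apply: pos_part_le; [apply: (hz' (exist _ (n, b) h))|case: h].
suff wz : w = 0 by rewrite -wz; apply: le_pos_part.
have step1 : forall m, D m w.
  move=> m.
  pose S j := psum u m.+2 j.
  have S_in j : D m.+1 (S j) by apply: psum_in.
  pose mj j := mt w (S j).
  pose rj j := w - mj j.
  have rjE j : rj j = jn 0 (w - S j) by apply: sub_meet.
  have S0 j : le 0 (S j) by apply: psum_ge0.
  have rjdec j j' : (j <= j')%N -> le (rj j') (rj j).
    move=> hj; rewrite !rjE; apply: join_mono; first exact: lexx.
    by apply: le_addl; apply: le_opp; apply: psum_inc_le.
  have rj0 j : le 0 (rj j) by rewrite rjE; apply: pos_part_ge0.
  have mjw j : le (mj j) w by apply: meet_l.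
  have huo : uoconv_in setT nat_le mj w.
    move=> y' _; exists nat, nat_le, rj; split; first exact: natle_dir.
    split => //; split; first exact: rjdec.
    split => //; split; last first.
      move=> b0; exists b0 => a ha; rewrite subr0 abs_meet.
      apply: le_tr (meet_l _ _) _; rewrite abs_sub abs_pos; last exact: le_subl.
      exact: rjdec.
    move=> r _ hr; pose q := jn 0 r.
    have q0 : le 0 q by apply: pos_part_ge0.
    have hq j : le q (rj j) by apply: pos_part_le.
    suff qz : q = 0 by rewrite -qz; apply: le_pos_part.
    apply: (arch_tail (u := u) (n := m.+2) (b0 := ab y)) => //.
      by split => [|k _]; [apply: abs_ge0|apply: uy].
    move=> b [hb0 hb]; have wb := hwb _ _ (conj hb0 hb).
    have hk k : (m.+2 <= k)%N -> le q (b - u k).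
      move=> hk; apply: le_tr (hq (k - m.+2)%N) _; rewrite rjE.
      have huk : le (u k) (S (k - m.+2)%N) by apply: psum_ge => //; apply/andP; split => //; rewrite subnKC.
      apply: le_tr (_ : le _ (jn 0 (b - u k))) _.
        apply: join_mono; first exact: lexx.
        by apply: le_add; [exact: wb|apply: le_opp].
      by rewrite joinC join_id; [apply: lexx|apply: le_subl; apply: hb].
    split.
      apply: le_subl; apply: le_tr (hk _ (leqnn _)) _; apply: le_sub0; exact: u0.
    move=> k hkk; have h := hk k hkk; apply/le_subP.
    by have := proj1 (le_subP _ _) h; rewrite addrAC.
  have [j0 hj0] := uF_uoL.2 nat nat_le mj w natle_dir (fun _ => I) I huo _ (huF m.+1).
  have h1 : D m.+1 (w - mj j0) by apply: (Dsol _ _ _ (hj0 j0 (leqnn _))); [apply: le_subl|rewrite abs_sub abs_pos; [apply: lexx|apply: le_subl]].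
  have h2 : D m.+1 (mj j0).
    apply: (Dsol _ _ _ (S_in j0)); first exact: meet_pos.
    by rewrite abs_pos //; apply: meet_r.
  by have := hnorm m _ _ h2 h1; rewrite addrC subrK.
have hperp' k : mt (u k) w = 0.
  have := hperp k w step1; rewrite (abs_pos w0) => h.
  exact: (meet_zero_le (u0 k) (meet_l _ _) h w0).
apply: (arch_tail (u := u) (n := 0%N) (b0 := ab y)) => // b [hb0 hb].
have wb := hwb _ _ (conj hb0 hb).
split; first exact: le_subl.
move=> k hk; have hs : le (u k + w) b.
  by rewrite -disj_sum ?hperp' //; apply: join_lub => //; apply: hb.
by have := le_addr (- w) hs; rewrite addrK.
Qed.

Lemma normal_decr (W : nat -> set E) : (forall n, uF F NF (W n)) -> normal_seq W ->
  forall n m, (n <= m)%N -> W m `<=` W n.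
Proof.
move=> hW hn n m /subnK <-; elim: (m - n)%N => [|k ih]; first by [].
rewrite addSn => a ha; apply: ih; rewrite -[a]addr0; apply: hn => //; apply: uF0; apply: hW.
Qed.

Lemma uF_setT : uF F NF setT.
Proof. have [[U hU] [_ [hup _]]] := uF_top; exact: hup hU _ _. Qed.

Lemma uF_I U V : uF F NF U -> uF F NF V -> uF F NF (U `&` V).
Proof. by have [_ [_ [_ [h _]]]] := uF_top; apply: h. Qed.

Lemma part1 : (forall e, carrier (uF F NF) e) ->
  forall (A : Type) (leA : A -> A -> Prop) (x : A -> E) (l : E),
  directed leA -> tconv (uF F NF) leA x l ->
  exists al : nat -> A,
    [/\ embedded_seq leA al,
        uoconv_in setT nat_le (fun n => x (al n)) l &
        tconv (uF F NF) nat_le (fun n => x (al n)) l].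
Proof.
move=> hC A leA x l [[a00 _] hrefl htrans hub] htc.
have [sig hsig] := choice hC.
have hnext : forall p : A * set E, exists b, [/\ leA p.1 b,
    (uF F NF p.2 -> forall g, leA b g -> p.2 (x g - l)) &
    (~ (exists top, forall a, leA a top) -> ~ leA b p.1)].
  move=> [a U] /=.
  have [a0 ha0] : exists a0, uF F NF U -> forall g, leA a0 g -> U (x g - l).
    have [hU|hU] := pselect (uF F NF U); last by exists a.
    by have [a0 ha0] := htc U hU; exists a0.
  have [c [hac ha0c]] := hub a a0.
  have [htop|hntop] := pselect (exists top, forall a, leA a top).
    exists c; split => // hU g hcg; apply: ha0 => //; exact: (htrans _ _ _ ha0c hcg).
  have [b hb] : exists b, ~ leA b a.
    by apply/not_existsP => hn; apply: hntop; exists a => b; apply: contrapT; apply: hn.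
  have [c' [hcc' hbc']] := hub c b.
  exists c'; split.
  - exact: (htrans _ _ _ hac hcc').
  - move=> hU g hg; apply: ha0 => //; apply: (htrans _ _ _ ha0c (htrans _ _ _ hcc' hg)).
  - by move=> _ hc'a; apply: hb; apply: (htrans _ _ _ hbc' hc'a).
have [nx hnx] := choice hnext.
pose st := fix st n : A * (nat -> set E) := if n is k.+1 then
   let C' := fun m => (st k).2 m `&` sig (x (st k).1 - l) m in (nx ((st k).1, C' k.+1), C')
   else (nx (a00, setT), fun _ => setT).
pose al n := (st n).1.
pose C n := (st n).2.
have Cdef : forall n m u, C n m u <-> forall i, (i < n)%N -> sig (x (al i) - l) m u.
  elim=> [|n ih] m u; first by split.
  rewrite /C /=; split.
    move=> [h1 h2] i; rewrite ltnS leq_eqVlt => /orP[/eqP ->|]; first exact: h2.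
    by move=> hi; apply: (proj1 (ih m u) h1).
  move=> h; split; last exact: h.
  by apply/(ih m u) => i hi; apply: h; apply: ltnW.
have CuF : forall n m, uF F NF (C n m).
  elim=> [|n ih] m; first exact: uF_setT.
  by apply: uF_I; [apply: ih|case: (hsig (x (al n) - l))].
pose D n := C n n.
pose z n := x (al n) - l.
have sol i n : solid_in setT (sig (x (al i) - l) n) by case: (hsig (x (al i) - l)).
have Dsol n : solid_in setT (D n).
  split => // a b _ hb hab; apply/Cdef => i hi.
  have [_ s] := sol i n; apply: (s a b I _ hab); exact: proj1 (Cdef _ _ _) hb i hi.
have Dnorm : normal_seq D.
  move=> n a b ha hb; apply/Cdef => i hi.
  have [_ _ hn _] := hsig (x (al i) - l).
  by apply: hn; [apply: (proj1 (Cdef _ _ _) ha)|apply: (proj1 (Cdef _ _ _) hb)]; apply: ltnW.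
have Dz : forall n, D n (z n).
  case=> [|n]; first by [].
  have [_ h _] := hnx ((st n).1, C n.+1 n.+1).
  by apply: (h (CuF _ _)); apply: hrefl.
have Dperp : forall k w, (forall n, D n w) -> mt (ab (z k)) (ab w) = 0.
  move=> k w hw; have [hu _ hn [_ hd]] := hsig (z k).
  apply: hd => n _.
  have hk : sig (z k) k.+1 w by apply: (proj1 (Cdef _ _ _) (hw k.+1)).
  have [hnk|hnk] := leqP n k.+1.
    exact: (normal_decr hu hn hnk).
  exact: (proj1 (Cdef n n w) (hw n) k (ltn_trans (ltnSn k) hnk)).
have huo : uoconv_in setT nat_le (fun n => x (al n)) l.
  move=> y _; exact: (uo_of_normal (fun n => CuF n n) Dsol Dnorm Dz Dperp).
exists al; split => //.
- split; first by move=> n; have [h _ _] := hnx ((st n).1, C n.+1 n.+1).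
  by move=> hnt n; have [_ _ h] := hnx ((st n).1, C n.+1 n.+1); apply: h.
- exact: uF_uoL.2 nat nat_le _ l natle_dir (fun _ => I) I huo.
Qed.

Lemma strict_ge (p : nat -> nat) : strict_incr p -> forall n, (n <= p n)%N.
Proof. by move=> hp; elim=> [|n ih] //; apply: leq_ltn_trans ih (hp n). Qed.

Lemma part2 : (forall e, carrier (uF F NF) e) ->
  forall (x : nat -> E) (l : E),
    tconv (uF F NF) nat_le x l <->
    (forall p : nat -> nat, strict_incr p ->
       exists q : nat -> nat, strict_incr q /\
         uoconv_in setT nat_le (fun n => x (p (q n))) l).
Proof.
move=> hC x l; split.
  move=> htc p hp.
  have htp : tconv (uF F NF) nat_le (fun n => x (p n)) l.
    move=> U hU; have [n0 hn0] := htc U hU; exists n0 => n hn.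
    by apply: hn0; apply: leq_trans hn (strict_ge hp n).
  have [al [[hal1 hal2] huo _]] := part1 hC natle_dir htp.
  exists al; split => // n; rewrite ltnNge; apply/negP => h.
  apply: (hal2 _ n h) => -[top htop].
  by have := htop top.+1; rewrite /nat_le ltnn.
move=> hsub; apply: contrapT => hnc.
have [U [hU hnU]] : exists U, uF F NF U /\ forall n0, exists n, (n0 <= n)%N /\ ~ U (x n - l).
  apply/not_existsP => hn; apply: hnc => U hU; apply: contrapT => hev.
  apply: (hn U); split => // n0; apply/not_existsP => hn2; apply: hev.
  by exists n0 => n hn'; apply: contrapT => hUn; apply: (hn2 n).
have [g hg] := choice hnU.
pose p := fix p n := if n is k.+1 then g (p k).+1 else g 0%N.
have hp : strict_incr p by move=> n; exact: (hg (p n).+1).1.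
have hpU n : ~ U (x (p n) - l) by case: n => [|n]; [exact: (hg 0%N).2|exact: (hg (p n).+1).2].
have [q [hq huo]] := hsub p hp.
have := uF_uoL.2 nat nat_le _ l natle_dir (fun _ => I) I huo U hU.
by move=> [n0 hn0]; apply: (hpU (q n0)); apply: hn0; apply: leqnn.
Qed.

Lemma arch_gen (Q : E -> Prop) b0 c : le 0 c -> Q b0 -> (forall b, Q b -> Q (b - c)) ->
  (forall b, Q b -> le 0 b) -> c = 0.
Proof.
move=> c0 hb0 hstep hpos.
have hi : forall i, Q (b0 - c *+ i).
  by elim=> [|i ih]; [rewrite mulr0n subr0|rewrite mulrSr opprD addrA; apply: hstep].
apply: (@archi R E c b0 c0) => i; have h := hpos _ (hi i).
by have := le_addr (c *+ i) h; rewrite add0r subrK.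
Qed.

Lemma disj_uo (d : nat -> E) : (forall n, F (d n)) ->
  (forall m n, m <> n -> mt (ab (d m)) (ab (d n)) = 0) -> uoconv_in F nat_le d 0.
Proof.
move=> hF hd y hy.
pose u k := mt (ab (d k)) (ab y).
have -> : (fun a => mt (ab (d a - 0)) (ab y)) = u by apply: funext => a; rewrite subr0.
have u0 k : le 0 (u k) by apply: meet_abs_ge0.
have uy k : le (u k) (ab y) by apply: meet_r.
have Fy : F (ab y) by apply: Fabs.
have uperp j k : j <> k -> mt (u j) (u k) = 0.
  move=> hjk; apply: le_anti; last exact: meet_pos.
  by rewrite -(hd j k hjk); apply: meet_mono; apply: meet_l.
pose Q n b := F b /\ tailb u n b.
have Qpos n b : Q n b -> le 0 b by case=> _ [].
have Qy n : Q n (ab y) by split => //; split => [|k _]; [apply: abs_ge0|apply: uy].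
pose B := {p : nat * E | Q p.1 p.2}.
pose leB (p q : B) := le (sval q).2 (sval p).2.
exists B, leB, (fun p => (sval p).2); split.
  split; [by exists (exist _ (0%N, ab y) (Qy 0%N))|by move=> p; apply: lexx|by move=> p q r h1 h2; apply: le_tr h2 h1|].
  move=> [[n1 b1] [f1 [h1 h1']]] [[n2 b2] [f2 [h2 h2']]].
  have ht : Q (maxn n1 n2) (mt b1 b2).
    split; first by apply: (Fpos f1); [apply: meet_pos|rewrite abs_pos //; apply: meet_l].
    split; first exact: meet_pos.
    move=> k; rewrite geq_max => /andP [k1 k2]; apply: meet_glb; [exact: h1'|exact: h2'].
  by exists (exist _ (maxn n1 n2, mt b1 b2) ht); split; [apply: meet_l|apply: meet_r].
split; first by move=> p; case: (svalP p).
split; first by move=> p q.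
split; first by move=> p; apply: (Qpos _ _ (svalP p)).
split; last first.
  move=> p; exists (sval p).1 => a ha; rewrite subr0 (abs_pos (u0 a)).
  by case: (svalP p) => _ [_]; apply.
move=> z Fz hz'.
pose w := jn 0 z.
have w0 : le 0 w by apply: pos_part_ge0.
have hwb n b : Q n b -> le w b.
  by move=> h; apply: pos_part_le; [apply: (hz' (exist _ (n, b) h))|apply: Qpos h].
have Fw : F w by apply: (Fpos Fy w0); rewrite abs_abs; apply: hwb (Qy 0%N).
suff wz : w = 0 by rewrite -wz; apply: le_pos_part.
have step (c : E) n : le 0 c -> le c w -> (forall k, (n <= k)%N -> mt (u k) c = 0) ->
    forall b, Q n b -> Q n (b - c).
  move=> c0 cw hperp b [Fb [hb0 hb]].
  have cb : le c b by apply: le_tr cw (hwb _ _ (conj Fb (conj hb0 hb))).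
  split; first by apply: FB => //; apply: (Fpos Fw c0); rewrite abs_pos.
  split; first exact: le_subl.
  move=> k hk; have hs : le (u k + c) b.
    by rewrite -disj_sum ?hperp //; apply: join_lub => //; apply: hb.
  by have := le_addr (- c) hs; rewrite addrK.
have hperp j : mt w (u j) = 0.
  apply: (arch_gen (Q := Q j.+1) (b0 := ab y)) => //.
  - by apply: meet_pos.
  - apply: step; [exact: meet_pos|exact: meet_l|].
    move=> k hk; apply: le_anti; last by apply: meet_pos => //; apply: meet_pos.
    rewrite -(uperp k j _); last by move=> e; move: hk; rewrite e ltnn.
    by apply: meet_mono; [apply: lexx|apply: meet_r].
  - exact: Qpos.
apply: (arch_gen (Q := Q 0%N) (b0 := ab y)) => //; last exact: Qpos.
apply: step => //; first exact: lexx.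
by move=> k _; rewrite meetC.
Qed.

Lemma paren : metrisable_in F NF -> uo_Lebesgue_in F NF -> has_countable_order_basis_in F.
Proof.
move=> hm [_ huoL].
have [V [hV hV0]] := metric_nseq hm.
pose Pf (P : set E) := P `<=` [set d | [/\ F d, le 0 d & d <> 0]] /\
   (forall a b, P a -> P b -> a <> b -> mt a b = 0).
have [A [PA Amax]] : exists A, Pf A /\ forall B, A `<` B -> ~ Pf B.
  apply: Zorn_bigcup => Fam FP ftot; split.
    by move=> a [X FX Xa]; apply: (FP X FX).1.
  move=> a b [X FX Xa] [Y FY Yb] ab.
  case: (ftot X Y FX FY) => [XY|YX].
    exact: (FP Y FY).2 a b (XY a Xa) Yb ab.
  exact: (FP X FX).2 a b Xa (YX b Yb) ab.
have Aprop a : A a -> [/\ F a, le 0 a & a <> 0] by move=> h; apply: PA.1.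
pose Ak (k : nat) := [set a | A a /\ ~ V k a].
have finAk : forall k, finite_set (Ak k).
  move=> k; apply: contrapT => hinf.
  have hnew : forall s : seq E, exists a, Ak k a /\ a \notin s.
    move=> s; apply: contrapT => hn; apply: hinf.
    apply: (sub_finite_set (B := [set` s])) => // a ha.
    by apply: contrapT => has; apply: hn; exists a; split => //; apply/negP.
  have [g hg] := choice hnew.
  pose L := fix L n := if n is m.+1 then g (L m) :: L m else [::].
  pose d n := g (L n).
  have inL : forall m n, (m < n)%N -> d m \in L n.
    move=> m; elim=> [//|n ih]; rewrite ltnS leq_eqVlt => /orP[/eqP ->|h].
      by rewrite /= inE eqxx.
    by rewrite /= inE (ih h) orbT.
  have dneq m n : m <> n -> d m <> d n.
    move=> hmn; have [hlt|hlt] := ltnP m n.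
      move=> e; have := (hg (L n)).2; rewrite -/(d n) -e; by rewrite inL.
    have hlt' : (n < m)%N by rewrite ltn_neqAle hlt andbT; apply/eqP => e; apply: hmn.
    move=> e; have := (hg (L m)).2; rewrite -/(d m) e; by rewrite inL.
  have dA n : A (d n) by case: (hg (L n)) => [[]].
  have dV n : ~ V k (d n) by case: (hg (L n)) => [[]].
  have Fd n : F (d n) by case: (Aprop _ (dA n)).
  have huo : uoconv_in F nat_le d 0.
    apply: disj_uo => // m n hmn.
    have [_ hm0 _] := Aprop _ (dA m); have [_ hn0 _] := Aprop _ (dA n).
    rewrite (abs_pos hm0) (abs_pos hn0); apply: PA.2 => //; exact: dneq.
  have [hNF _ _] := hV.
  have [n0 hn0] := huoL nat nat_le d 0 natle_dir Fd F0 huo _ (hNF k).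
  by apply: (dV n0); have := hn0 n0 (leqnn _); rewrite subr0.
exists (A `|` [set 0]); split; last first.
  apply: (sub_countable (B := \bigcup_(k in [set: nat]) (Ak k `|` [set 0]))).
    apply: subset_card_le => a [ha|->]; last by exists 0%N => //; right.
    have [Fa _ an0] := Aprop _ ha.
    have [k hk] : exists k, ~ V k a.
      by apply/not_existsP => hn; apply: an0; apply: hV0 => n; apply: contrapT; apply: hn.
    by exists k => //; left.
  apply: bigcup_countable => // k _; apply: finite_set_countable.
  by rewrite finite_setU; split; [apply: finAk|apply: finite_set1].
split.
- by move=> a [/Aprop []|->] //; apply: F0.
- by exists 0; right.
move=> x [Fx hx]; apply: contrapT => xn0.
have axn0 : ab x <> 0 by move=> /abs_eq0.
have hxa a : A a -> mt a (ab x) = 0.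
  move=> ha; have [_ a0 _] := Aprop _ ha.
  by have := hx a (or_introl ha); rewrite /disj meetC (abs_pos a0).
have hPf : Pf (A `|` [set ab x]).
  split.
    move=> a ha; case: ha => [/Aprop h|->] //.
    by split; [exact: Fabs|exact: abs_ge0|exact: axn0].
  move=> a b [ha|->] [hb|->] hab.
  - exact: PA.2.
  - exact: hxa.
  - by rewrite meetC; apply: hxa.
  - by exfalso; apply: hab.
apply: (Amax _ _ hPf); split.
- by move=> a ha; left.
- move=> hsub; have := hxa _ (hsub (ab x) (or_intror erefl)).
  by rewrite meet_id //; apply: lexx.
Qed.
End Main.

Theorem corollary5p10 (R : realType) (E : VL R) (F : set E)
    (NF : set (set E)) :
  is_ideal F -> order_dense F -> o_Lebesgue_in F NF ->
  (* u_F tau_F is a uo-Lebesgue topology on E *)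
  uo_Lebesgue_in setT (uF F NF) /\
  (* the parenthetical remark in (b) *)
  (metrisable_in F NF -> uo_Lebesgue_in F NF ->
     has_countable_order_basis_in F) /\
  ((countable_sup_property E \/
    (metrisable_in F NF /\ has_countable_order_basis_in F)) ->
   [/\ carrier (uF F NF) = setT,
       (* (1) *)
       (forall (A : Type) (leA : A -> A -> Prop) (x : A -> E) (l : E),
          directed leA -> tconv (uF F NF) leA x l ->
          exists al : nat -> A,
            [/\ embedded_seq leA al,
                uoconv_in setT nat_le (fun n => x (al n)) l &
                tconv (uF F NF) nat_le (fun n => x (al n)) l]) &
       (* (2) *)
       (forall (x : nat -> E) (l : E),
          tconv (uF F NF) nat_le x l <->
          (forall p : nat -> nat, strict_incr p ->
             exists q : nat -> nat, strict_incr q /\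
               uoconv_in setT nat_le (fun n => x (p (q n))) l))]).
Proof.
move=> hI hD hL.
split; first exact: (uF_uoL hI hD hL).
split; first exact: (paren hI hL).
move=> hcase.
have hC : forall e, carrier (uF F NF) e.
  move=> e; case: hcase => [csp|[hm hb]].
    exact: (carrier_csp hI hD hL).
  exact: (carrier_basis hI hD hL).
split.
- by apply: funext => e; apply: propext; split => // _; apply: hC.
- exact: (part1 hI hD hL hC).
- exact: (part2 hI hD hL hC).
Qed.
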